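(* Let $P\in\Delta$ with $\mathcal Y=\mathcal Z$, and suppose that the marginal distributions of the pairs $(X,Y)$ and $(X,Z)$ are identical, i.e. $P(X=x,Y=w)=P(X=x,Z=w)$ for all $x\in\mathcal X$, $w\in\mathcal Y$. Then $\widetilde{UI}(X:Y\setminus Z)=\widetilde{UI}(X:Z\setminus Y)=0$, $\widetilde{SI}(X:Y;Z)=MI(X:Y)=MI(X:Z)$, and $\widetilde{CI}(X:Y;Z)=MI(X:Y|Z)=MI(X:Z|Y)$.
   Context: $X,Y,Z$ are random variables with finite state spaces $\mathcal X,\mathcal Y,\mathcal Z$. $\Delta$ denotes the set of all probability distributions on $\mathcal X\times\mathcal Y\times\mathcal Z$; $P\in\Delta$ is the joint distribution (unsubscripted quantities refer to $P$), a subscript $Q$ means computed w.r.t. $Q\in\Delta$. $\Delta_P=\{Q\in\Delta: Q(X=x,Y=y)=P(X=x,Y=y)\text{ and }Q(X=x,Z=z)=P(X=x,Z=z)\ \forall x,y,z\}$. $CoI_Q(X;Y;Z)=MI_Q(X:Y)-MI_Q(X:Y|Z)$. Define $\widetilde{UI}(X:Y\setminus Z)=\min_{Q\in\Delta_P}MI_Q(X:Y|Z)$, $\widetilde{UI}(X:Z\setminus Y)=\min_{Q\in\Delta_P}MI_Q(X:Z|Y)$, $\widetilde{SI}(X:Y;Z)=\max_{Q\in\Delta_P}CoI_Q(X;Y;Z)$, $\widetilde{CI}(X:Y;Z)=MI(X:(Y,Z))-\min_{Q\in\Delta_P}MI_Q(X:(Y,Z))$. *)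

(* Defs.v *)
From mathcomp Require Import all_boot.
From Stdlib Require Import Reals ClassicalEpsilon.

Set Implicit Arguments.
Unset Strict Implicit.
Unset Printing Implicit Defensive.

Local Open Scope R_scope.

Notation "\rsum_ ( i : T ) F" := (\big[Rplus/0%R]_(i : T) F)
  (at level 41, F at level 41, i, T at level 50).

Section Info.
Variables (X Y Z : finType).

Definition jdist := X -> Y -> Z -> R.

Definition is_prob (Q : jdist) : Prop :=
  (forall x y z, 0 <= Q x y z) /\
  \rsum_(x : X) \rsum_(y : Y) \rsum_(z : Z) Q x y z = 1.

Definition pXY (Q : jdist) x y := \rsum_(z : Z) Q x y z.
Definition pXZ (Q : jdist) x z := \rsum_(y : Y) Q x y z.
Definition pYZ (Q : jdist) y z := \rsum_(x : X) Q x y z.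
Definition pX (Q : jdist) x := \rsum_(y : Y) \rsum_(z : Z) Q x y z.
Definition pY (Q : jdist) y := \rsum_(x : X) \rsum_(z : Z) Q x y z.
Definition pZ (Q : jdist) z := \rsum_(x : X) \rsum_(y : Y) Q x y z.

(* p * ln (p / q), with the convention 0 * ln(0/q) = 0 *)
Definition plogr (p q : R) : R := if Rle_dec p 0 then 0 else p * ln (p / q).

Definition MI_XY (Q : jdist) : R :=
  \rsum_(x : X) \rsum_(y : Y) plogr (pXY Q x y) (pX Q x * pY Q y).
Definition MI_XZ (Q : jdist) : R :=
  \rsum_(x : X) \rsum_(z : Z) plogr (pXZ Q x z) (pX Q x * pZ Q z).
Definition MI_XY_Z (Q : jdist) : R :=
  \rsum_(x : X) \rsum_(y : Y) \rsum_(z : Z)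
    plogr (Q x y z) (pXZ Q x z * pYZ Q y z / pZ Q z).
Definition MI_XZ_Y (Q : jdist) : R :=
  \rsum_(x : X) \rsum_(y : Y) \rsum_(z : Z)
    plogr (Q x y z) (pXY Q x y * pYZ Q y z / pY Q y).
Definition MI_X_YZ (Q : jdist) : R :=
  \rsum_(x : X) \rsum_(y : Y) \rsum_(z : Z)
    plogr (Q x y z) (pX Q x * pYZ Q y z).
Definition CoI (Q : jdist) : R := MI_XY Q - MI_XY_Z Q.

Definition in_DeltaP (P Q : jdist) : Prop :=
  is_prob Q /\
  (forall x y, pXY Q x y = pXY P x y) /\
  (forall x z, pXZ Q x z = pXZ P x z).

End Info.

Definition is_min (S : R -> Prop) (m : R) : Prop := S m /\ forall v, S v -> m <= v.
Definition is_max (S : R -> Prop) (m : R) : Prop := S m /\ forall v, S v -> v <= m.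
Definition min_val (S : R -> Prop) : R := epsilon (inhabits 0%R) (is_min S).
Definition max_val (S : R -> Prop) : R := epsilon (inhabits 0%R) (is_max S).

Section Tilde.
Variables (X Y Z : finType).

Definition UIt_Y (P : jdist X Y Z) : R :=
  min_val (fun v => exists Q, in_DeltaP P Q /\ v = MI_XY_Z Q).
Definition UIt_Z (P : jdist X Y Z) : R :=
  min_val (fun v => exists Q, in_DeltaP P Q /\ v = MI_XZ_Y Q).
Definition SIt (P : jdist X Y Z) : R :=
  max_val (fun v => exists Q, in_DeltaP P Q /\ v = CoI Q).
Definition CIt (P : jdist X Y Z) : R :=
  MI_X_YZ P - min_val (fun v => exists Q, in_DeltaP P Q /\ v = MI_X_YZ Q).
End Tilde.

(* Main.v *)
Require Import Defs.
From HB Require Import structures.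
From mathcomp Require Import all_boot.
From Stdlib Require Import Reals Lra ClassicalEpsilon.

Set Implicit Arguments.
Unset Strict Implicit.
Unset Printing Implicit Defensive.
Local Open Scope R_scope.

HB.instance Definition _ := Monoid.isComLaw.Build R 0 Rplus (fun a b c => esym (Rplus_assoc a b c)) Rplus_comm Rplus_0_l.

Lemma rsum_le (T : finType) (F G : T -> R) :
  (forall i, F i <= G i) -> \rsum_(i : T) F i <= \rsum_(i : T) G i.
Proof. move=> H; elim/big_rec2: _ => //; [lra| move=> i a b _ ?; move: (H i); lra]. Qed.

Lemma rsum_ge0 (T : finType) (F : T -> R) :
  (forall i, 0 <= F i) -> 0 <= \rsum_(i : T) F i.
Proof. move=> H; elim/big_rec: _ => //; [lra| move=> i a _ ?; move: (H i); lra]. Qed.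

Lemma rsum_term (T : finType) (F : T -> R) j :
  (forall i, 0 <= F i) -> F j <= \rsum_(i : T) F i.
Proof.
move=> H; rewrite (bigD1 j) //=.
have : 0 <= \big[Rplus/0]_(i | i != j) F i.
  elim/big_rec: _ => //; [lra| move=> i a _ ?; move: (H i); lra].
lra.
Qed.

Lemma rsum_mull (T : finType) c (F : T -> R) :
  \rsum_(i : T) (c * F i) = c * \rsum_(i : T) F i.
Proof. elim/big_rec2: _ => //; [ring| move=> i a b _ ->; ring]. Qed.

Lemma rsum_mulr (T : finType) c (F : T -> R) :
  \rsum_(i : T) (F i * c) = (\rsum_(i : T) F i) * c.
Proof. elim/big_rec2: _ => //; [ring| move=> i a b _ ->; ring]. Qed.

Lemma rsum_split (T : finType) (F G : T -> R) :
  \rsum_(i : T) (F i + G i) = \rsum_(i : T) F i + \rsum_(i : T) G i.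
Proof. by rewrite big_split. Qed.

Lemma rsum_ext (T : finType) (F G : T -> R) :
  (forall i, F i = G i) -> \rsum_(i : T) F i = \rsum_(i : T) G i.
Proof. by move=> H; apply: eq_bigr. Qed.

Lemma rsum_exch (T U : finType) (F : T -> U -> R) :
  \rsum_(i : T) \rsum_(j : U) F i j = \rsum_(j : U) \rsum_(i : T) F i j.
Proof. exact: exchange_big. Qed.

Lemma rsum_eq0 (T : finType) (F : T -> R) :
  (forall i, F i = 0) -> \rsum_(i : T) F i = 0.
Proof. by move=> H; apply: big1 => i _; apply: H. Qed.

Lemma rsum_delta (T : finType) (F : T -> R) j :
  \rsum_(i : T) (if i == j then F i else 0) = F j.
Proof.
rewrite (bigD1 j) //= eqxx big1 ?Rplus_0_r //.
by move=> i /negbTE ->.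
Qed.

Lemma rsum_delta' (T : finType) (F : T -> R) j :
  \rsum_(i : T) (if j == i then F i else 0) = F j.
Proof.
rewrite -(rsum_delta F j); apply: rsum_ext => i; by rewrite eq_sym.
Qed.

Lemma plogr_ge (q r : R) : 0 <= q -> 0 <= r -> (0 < q -> 0 < r) -> q - r <= plogr q r.
Proof.
move=> hq hr hqr; rewrite /plogr; case: Rle_dec => h /=; first lra.
have q0 : 0 < q by lra.
have r0 := hqr q0.
have t0 : 0 < r / q by apply: Rdiv_lt_0_compat.
have := exp_ineq1_le (ln (r / q)); rewrite exp_ln // => hl.
have -> : q / r = / (r / q) by field; lra.
rewrite ln_Rinv //.
have : q * (r / q) = r by field; lra.
move=> e.
have : q * (1 + ln (r / q)) <= q * (r / q) by apply: Rmult_le_compat_l; lra.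
lra.
Qed.

Lemma min_val_eq (S : R -> Prop) m : is_min S m -> min_val S = m.
Proof.
move=> h; rewrite /min_val.
have [h1 h2] := epsilon_spec (inhabits 0) (is_min S) (ex_intro _ m h).
case: h => m1 m2.
have := h2 _ m1; have := m2 _ h1; lra.
Qed.

Lemma max_val_eq (S : R -> Prop) m : is_max S m -> max_val S = m.
Proof.
move=> h; rewrite /max_val.
have [h1 h2] := epsilon_spec (inhabits 0) (is_max S) (ex_intro _ m h).
case: h => m1 m2.
have := h2 _ m1; have := m2 _ h1; lra.
Qed.

Lemma rsum_sub (T : finType) (F G : T -> R) :
  \rsum_(i : T) (F i - G i) = \rsum_(i : T) F i - \rsum_(i : T) G i.
Proof. elim/big_rec3: _ => //; [ring| move=> i a b c _ ->; ring]. Qed.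

Lemma rsum_exch3 (T U V : finType) (F : T -> U -> V -> R) :
  \rsum_(i : T) \rsum_(j : U) \rsum_(k : V) F i j k =
  \rsum_(k : V) \rsum_(i : T) \rsum_(j : U) F i j k.
Proof.
rewrite (rsum_ext (fun i => rsum_exch (F i))); exact: rsum_exch.
Qed.
Section Info2.
Variables (X Y Z : finType).
Implicit Types (Q : jdist X Y Z).

Definition jnonneg Q := forall x y z, 0 <= Q x y z.

Lemma ge_pXZ Q x y z : jnonneg Q -> Q x y z <= pXZ Q x z.
Proof. by move=> h; rewrite /pXZ; apply: (@rsum_term _ (fun y => Q x y z)) => i; apply: h. Qed.
Lemma ge_pYZ Q x y z : jnonneg Q -> Q x y z <= pYZ Q y z.
Proof. by move=> h; rewrite /pYZ; apply: (@rsum_term _ (fun x => Q x y z)) => i; apply: h. Qed.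
Lemma ge_pXY Q x y z : jnonneg Q -> Q x y z <= pXY Q x y.
Proof. by move=> h; rewrite /pXY; apply: (@rsum_term _ (fun z => Q x y z)) => i; apply: h. Qed.
Lemma ge_pZ Q x z : jnonneg Q -> pXZ Q x z <= pZ Q z.
Proof.
move=> h; rewrite /pZ; apply: (@rsum_term _ (fun x => pXZ Q x z)) => i.
by apply: rsum_ge0 => j; apply: h.
Qed.
Lemma ge_pX Q x z : jnonneg Q -> pXZ Q x z <= pX Q x.
Proof.
move=> h; rewrite /pX rsum_exch.
apply: (@rsum_term _ (fun z => pXZ Q x z)) => i.
by apply: rsum_ge0 => j; apply: h.
Qed.
Lemma ge0_pXZ Q x z : jnonneg Q -> 0 <= pXZ Q x z.
Proof. by move=> h; apply: rsum_ge0 => j; apply: h. Qed.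
Lemma ge0_pYZ Q y z : jnonneg Q -> 0 <= pYZ Q y z.
Proof. by move=> h; apply: rsum_ge0 => j; apply: h. Qed.
Lemma ge0_pZ Q z : jnonneg Q -> 0 <= pZ Q z.
Proof. by move=> h; apply: rsum_ge0 => j; apply: rsum_ge0 => k; apply: h. Qed.
Lemma ge0_pX Q x : jnonneg Q -> 0 <= pX Q x.
Proof. by move=> h; apply: rsum_ge0 => j; apply: rsum_ge0 => k; apply: h. Qed.

Lemma chain Q : jnonneg Q -> MI_X_YZ Q = MI_XZ Q + MI_XY_Z Q.
Proof.
move=> hQ.
pose L x z := ln (pXZ Q x z / (pX Q x * pZ Q z)).
have term : forall x y z, plogr (Q x y z) (pX Q x * pYZ Q y z) =
   plogr (Q x y z) (pXZ Q x z * pYZ Q y z / pZ Q z) + Q x y z * L x z.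
  move=> x y z; rewrite /plogr; case: Rle_dec => h /=.
    have -> : Q x y z = 0 by have := hQ x y z; lra.
    ring.
  have q0 : 0 < Q x y z by lra.
  have a0 : 0 < pXZ Q x z by have := ge_pXZ x y z hQ; lra.
  have b0 : 0 < pYZ Q y z by have := ge_pYZ x y z hQ; lra.
  have c0 : 0 < pZ Q z by have := ge_pZ x z hQ; lra.
  have d0 : 0 < pX Q x by have := ge_pX x z hQ; lra.
  rewrite /L -Rmult_plus_distr_l -ln_mult; last first.
  - by apply: Rdiv_lt_0_compat => //; apply: Rmult_lt_0_compat.
  - apply: Rdiv_lt_0_compat => //; apply: Rdiv_lt_0_compat => //.
    by apply: Rmult_lt_0_compat.
  congr (_ * ln _); field; lra.
rewrite /MI_X_YZ (rsum_ext (fun x => rsum_ext (fun y => rsum_ext (term x y)))).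
have split3 : forall F G : X -> Y -> Z -> R,
  \rsum_(x : X) \rsum_(y : Y) \rsum_(z : Z) (F x y z + G x y z) =
  \rsum_(x : X) \rsum_(y : Y) \rsum_(z : Z) F x y z +
  \rsum_(x : X) \rsum_(y : Y) \rsum_(z : Z) G x y z.
  move=> F G; rewrite -rsum_split; apply: rsum_ext => x.
  rewrite -rsum_split; apply: rsum_ext => y; exact: rsum_split.
rewrite split3 Rplus_comm; congr (_ + _).
rewrite /MI_XZ; apply: rsum_ext => x; rewrite rsum_exch; apply: rsum_ext => z.
rewrite rsum_mulr -/(pXZ Q x z) /L /plogr; case: Rle_dec => h /=.
  have -> : pXZ Q x z = 0 by have := ge0_pXZ x z hQ; lra.
  ring.
done.
Qed.

Lemma rinv_ge0 a : 0 <= a -> 0 <= / a.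
Proof.
move=> h; case: (Req_dec a 0) => [->|ne]; first by rewrite Rinv_0; lra.
left; apply: Rinv_0_lt_compat; lra.
Qed.

Lemma MI_XY_Z_ge0 Q : is_prob Q -> 0 <= MI_XY_Z Q.
Proof.
case=> hQ h1.
pose Rr x y z := pXZ Q x z * pYZ Q y z / pZ Q z.
have hR : forall x y z, 0 <= Rr x y z.
  move=> x y z; rewrite /Rr /Rdiv; apply: Rmult_le_pos; last exact: rinv_ge0 (ge0_pZ z hQ).
  apply: Rmult_le_pos; [exact: ge0_pXZ | exact: ge0_pYZ].
have le1 : forall x y z, Q x y z - Rr x y z <= plogr (Q x y z) (Rr x y z).
  move=> x y z; apply: plogr_ge => // q0.
  have a0 : 0 < pXZ Q x z by have := ge_pXZ x y z hQ; lra.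
  have b0 : 0 < pYZ Q y z by have := ge_pYZ x y z hQ; lra.
  have c0 : 0 < pZ Q z by have := ge_pZ x z hQ; lra.
  rewrite /Rr; apply: Rdiv_lt_0_compat => //; exact: Rmult_lt_0_compat.
have sumR : \rsum_(x : X) \rsum_(y : Y) \rsum_(z : Z) Rr x y z <= 1.
  rewrite (rsum_exch3 Rr) -h1 (rsum_exch3 Q).
  apply: rsum_le => z.
  have e : forall x, \rsum_(y : Y) Rr x y z = pXZ Q x z * pZ Q z / pZ Q z.
    move=> x; rewrite /Rr /Rdiv.
    rewrite (rsum_ext (fun y => (_ : _ = (pXZ Q x z * / pZ Q z) * pYZ Q y z))); last by move=> y; ring.
    rewrite rsum_mull /pYZ /pZ (rsum_exch (fun y x => Q x y z)); ring.
  rewrite (rsum_ext e) /Rdiv rsum_mulr rsum_mulr -/(pZ Q z).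
  have := ge0_pZ z hQ.
  case: (Req_dec (pZ Q z) 0) => [->|ne]; first by rewrite Rinv_0; lra.
  move=> _; rewrite Rmult_assoc Rinv_r //; lra.
have : \rsum_(x : X) \rsum_(y : Y) \rsum_(z : Z) (Q x y z - Rr x y z) <= MI_XY_Z Q.
  apply: rsum_le => x; apply: rsum_le => y; apply: rsum_le => z; exact: le1.
have -> : \rsum_(x : X) \rsum_(y : Y) \rsum_(z : Z) (Q x y z - Rr x y z) =
   \rsum_(x : X) \rsum_(y : Y) \rsum_(z : Z) Q x y z - \rsum_(x : X) \rsum_(y : Y) \rsum_(z : Z) Rr x y z.
  rewrite -rsum_sub; apply: rsum_ext => x; rewrite -rsum_sub; apply: rsum_ext => y.
  exact: rsum_sub.
lra.
Qed.

Definition sw Q : jdist X Z Y := fun x z y => Q x y z.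

Lemma pX_sw Q x : pX (sw Q) x = pX Q x.
Proof. by rewrite /pX rsum_exch. Qed.

Lemma MI_XZ_sw Q : MI_XZ (sw Q) = MI_XY Q.
Proof.
apply: rsum_ext => x; apply: rsum_ext => y; by rewrite pX_sw.
Qed.

Lemma MI_XY_Z_sw Q : MI_XY_Z (sw Q) = MI_XZ_Y Q.
Proof. apply: rsum_ext => x; exact: rsum_exch. Qed.

Lemma MI_X_YZ_sw Q : MI_X_YZ (sw Q) = MI_X_YZ Q.
Proof.
apply: rsum_ext => x; rewrite rsum_exch; apply: rsum_ext => y; apply: rsum_ext => z.
by rewrite pX_sw.
Qed.

Lemma MI_XY_DeltaP P Q : in_DeltaP P Q -> MI_XY Q = MI_XY P.
Proof.
case=> _ [h1 _]; apply: rsum_ext => x; apply: rsum_ext => y.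
rewrite h1 /pX /pY; congr (plogr _ (_ * _)); apply: rsum_ext => i; exact: h1.
Qed.

Lemma MI_XZ_DeltaP P Q : in_DeltaP P Q -> MI_XZ Q = MI_XZ P.
Proof.
case=> _ [_ h1]; apply: rsum_ext => x; apply: rsum_ext => y.
rewrite h1 /pX /pZ rsum_exch [in RHS]rsum_exch.
congr (plogr _ (_ * _)); apply: rsum_ext => i; exact: h1.
Qed.
End Info2.

Lemma chain2 (X Y Z : finType) (Q : jdist X Y Z) : jnonneg Q -> MI_X_YZ Q = MI_XY Q + MI_XZ_Y Q.
Proof.
move=> h; rewrite -MI_X_YZ_sw chain ?MI_XZ_sw ?MI_XY_Z_sw //.
by move=> x z y; apply: h.
Qed.

Unset Implicit Arguments.

Theorem mainTheorem5 (TX TY : finType) (P : jdist TX TY TY)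
  (hP : is_prob P)
  (hsym : forall (x : TX) (w : TY), pXY P x w = pXZ P x w) :
  UIt_Y P = 0%R /\ UIt_Z P = 0%R /\
  SIt P = MI_XY P /\ MI_XY P = MI_XZ P /\
  CIt P = MI_XY_Z P /\ MI_XY_Z P = MI_XZ_Y P.
Proof.
have hPn : jnonneg P by case: hP.
have pXY0 : forall x y, 0 <= pXY P x y.
  by move=> x y; apply: rsum_ge0 => z; apply: hPn.
pose Q0 : jdist TX TY TY := fun x y z => if y == z then pXY P x y else 0.
have hQ0n : jnonneg Q0 by move=> x y z; rewrite /Q0; case: eqP => _; [exact: pXY0|lra].
have pXYQ0 : forall x y, pXY Q0 x y = pXY P x y.
  by move=> x y; rewrite /pXY /Q0 (rsum_delta' (fun _ => \rsum_(z : TY) P x y z) y).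
have pXZQ0 : forall x z, pXZ Q0 x z = pXZ P x z.
  by move=> x z; rewrite /pXZ /Q0 (rsum_delta (fun y => pXY P x y) z) hsym.
have hQ0 : in_DeltaP P Q0.
  split; last by split.
  split => //; case: hP => _ <-; apply: rsum_ext => x; apply: rsum_ext => y.
  exact: pXYQ0.
have h0 : MI_XY_Z Q0 = 0.
  apply: rsum_eq0 => x; apply: rsum_eq0 => y; apply: rsum_eq0 => z.
  rewrite /plogr; case: Rle_dec => h //= .
  move: h; rewrite /Q0; case: eqP => [<-|_] h; last lra.
  have a0 : 0 < pXY P x y by lra.
  set b := \rsum_(x : TX) pXY P x y.
  have eb1 : pYZ Q0 y y = b.
    by rewrite /pYZ /Q0 eqxx.
  have eb2 : pZ Q0 y = b.
    rewrite /pZ; apply: rsum_ext => x'.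
    by rewrite /Q0 (rsum_delta (fun y' => pXY P x' y') y).
  have b0 : 0 < b.
    have := @rsum_term _ (fun x => pXY P x y) x (fun i => pXY0 i y); rewrite -/b; lra.
  rewrite pXZQ0 -hsym eb1 eb2.
  have -> : pXY P x y / (pXY P x y * b / b) = 1 by field; lra.
  rewrite ln_1; ring.
have eqMI : MI_XY P = MI_XZ P.
  apply: rsum_ext => x; apply: rsum_ext => y.
  rewrite -hsym /pZ; congr (plogr _ (_ * _)).
  apply: rsum_ext => x'; exact: hsym.
have nn : forall Q, in_DeltaP P Q -> jnonneg Q by move=> Q [[]].
have eqcond : forall Q, in_DeltaP P Q -> MI_XZ_Y Q = MI_XY_Z Q.
  move=> Q hQ; have := chain (nn _ hQ); have := chain2 (nn _ hQ).
  rewrite (MI_XZ_DeltaP hQ) (MI_XY_DeltaP hQ) eqMI; lra.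
have ge0 : forall Q, in_DeltaP P Q -> 0 <= MI_XY_Z Q.
  by move=> Q [hQ _]; apply: MI_XY_Z_ge0.
have hPD : in_DeltaP P P by split => //; split.
split.
  apply: min_val_eq; split; first by exists Q0; split => //; rewrite h0.
  by move=> v [Q [hQ ->]]; apply: ge0.
split.
  apply: min_val_eq; split; first by exists Q0; split => //; rewrite eqcond // h0.
  by move=> v [Q [hQ ->]]; rewrite eqcond //; apply: ge0.
split.
  apply: max_val_eq; split.
    exists Q0; split => //; rewrite /CoI h0 (MI_XY_DeltaP hQ0); ring.
  move=> v [Q [hQ ->]]; rewrite /CoI (MI_XY_DeltaP hQ); have := ge0 _ hQ; lra.
split => //.
split; last by rewrite eqcond.
rewrite /CIt (min_val_eq (m := MI_XZ P)).
  rewrite (chain hPn); ring.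
split.
  exists Q0; split => //; rewrite chain // h0 (MI_XZ_DeltaP hQ0); ring.
move=> v [Q [hQ ->]]; rewrite chain ?(MI_XZ_DeltaP hQ); last exact: nn.
have := ge0 _ hQ; lra.
Qed.
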